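(* Consider a $(1+\varepsilon)$-adversarial sampling process (as in the context) on $k$ elements with $0<\varepsilon<1/2$ and initial weights normalized so that $\sum_{e\in E_0}w_0(e)=k$. Let $\ell_{max}$ be the largest $\ell\in\{1,2,\ldots,\lfloor |S_0|/2\rfloor\}$ that is bad, if such an $\ell$ exists, and $\ell_{max}=1$ otherwise. Then, for every realization of the process and every $i\in\{0,1,\ldots,k-1\}$, \[ \frac{w_i(E_i)}{k-i}\le 90\,\ell_{max}. \]
   Context: The $(1+\varepsilon)$-adversarial sampling process: initially there is a set $E_0$ of $k$ elements with nonnegative weights $w_0$. In round $i$, let $D_i$ be the distribution on $E_i$ with $\Pr_{D_i}(e)=w_i(e)/\sum_{e'\in E_i}w_i(e')$; an adversary chooses any distribution $D_i^\varepsilon$ on $E_i$ with $(1-\varepsilon)\Pr_{D_i}(e)\le\Pr_{D_i^\varepsilon}(e)\le(1+\varepsilon)\Pr_{D_i}(e)$ for all $e$; an element $e_{i+1}$ is sampled from $D_i^\varepsilon$ and $E_{i+1}=E_i\setminus\{e_{i+1}\}$; then the adversary chooses weights $0\le w_{i+1}(e)\le w_i(e)$ for $e\in E_{i+1}$. The adversary's choices may depend on the history. Notation: for $E\subseteq E_i$, $w_i(E)=\sum_{e\in E}w_i(e)$. For each $i$, partition $E_i=B_i\sqcup M_i\sqcup S_i$ where $e\in B_i$ iff $w_i(e)\ge 80$, $e\in M_i$ iff $2<w_i(e)<80$, and $e\in S_i$ iff $w_i(e)\le 2$. For $\ell\in\{1,\ldots,|S_0|\}$, $i_\ell$ is the smallest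 $i$ with $|S_i|=\ell$. An $\ell\in\{1,\ldots,\lfloor|S_0|/2\rfloor\}$ is called bad if both $w_{i_{2\ell}}(B_{i_{2\ell}})\le 8\ell$ and $w_{i_\ell}(B_{i_\ell})>4\ell$; otherwise it is good. *)

(* Defs.v *)
From HB Require Import structures.
From mathcomp Require Import all_boot all_order all_algebra.
Set Implicit Arguments. Unset Strict Implicit. Unset Printing Implicit Defensive.
Import Order.TTheory GRing.Theory Num.Theory.
Local Open Scope ring_scope.

(* A realization of the (1+eps)-adversarial sampling process
   on the finite ground set T (|T| = k):
   - e (i+1) : T is the element sampled in round i (i = 0..k-1);
   - w i : T -> R are the weights w_i (only their values on E_i matter);
   - p i : T -> R is the adversary's distribution D_i^eps in round i. *)

Section Process.
Variables (R : realFieldType) (T : finType).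
Variables (e : nat -> T) (w : nat -> T -> R).

Definition Eset (i : nat) : {set T} :=
  [set x | x \notin [seq e j | j <- iota 1 i]].

Definition wsum (i : nat) (A : {set T}) : R := \sum_(x in A) w i x.

Definition Bset (i : nat) : {set T} := [set x in Eset i | 80%:R <= w i x].
Definition Mset (i : nat) : {set T} :=
  [set x in Eset i | (2%:R < w i x) && (w i x < 80%:R)].
Definition Sset (i : nat) : {set T} := [set x in Eset i | w i x <= 2%:R].

Definition is_first_idx (l i : nat) : Prop :=
  #|Sset i| = l /\ forall j, (j < i)%N -> #|Sset j| <> l.

Definition bad (l : nat) : Prop :=
  exists i1 i2, is_first_idx l i1 /\ is_first_idx (2 * l) i2 /\
    wsum i2 (Bset i2) <= (8 * l)%:R /\ (4 * l)%:R < wsum i1 (Bset i1).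

Definition adv_realization (eps : R) (p : nat -> T -> R) : Prop :=
  (forall x, 0 <= w 0 x) /\
  forall i, (i < #|T|)%N ->
    [/\ e i.+1 \in Eset i,
        (forall x, x \in Eset i.+1 -> 0 <= w i.+1 x /\ w i.+1 x <= w i x) &
        (0 < wsum i (Eset i) ->
          [/\ forall x, x \in Eset i ->
                (1 - eps) * (w i x / wsum i (Eset i)) <= p i x /\
                p i x <= (1 + eps) * (w i x / wsum i (Eset i)),
              forall x, x \notin Eset i -> p i x = 0,
              \sum_(x in Eset i) p i x = 1 &
              0 < p i (e i.+1)])].

End Process.

(* Main.v *)
Require Import Defs.
From HB Require Import structures.
From mathcomp Require Import all_boot all_order all_algebra.
From mathcomp Require Import zify.
Import Order.TTheory GRing.Theory Num.Theory.
Local Open Scope ring_scope.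

Section Aux.
Variables (R : realFieldType) (T : finType) (e : nat -> T) (w : nat -> T -> R).
Hypothesis w0 : forall x, 0 <= w 0 x.
Hypothesis step : forall i, (i < #|T|)%N -> e i.+1 \in Eset e i /\
  (forall x, x \in Eset e i.+1 -> 0 <= w i.+1 x /\ w i.+1 x <= w i x).

Lemma EsetS i : Eset e i.+1 = Eset e i :\ e i.+1.
Proof.
apply/setP => x; rewrite !in_set -(addn1 i) iotaD map_cat mem_cat.
have -> : [seq e j | j <- iota (1 + i) 1] = [:: e i.+1] by [].
by rewrite mem_seq1 in_set1 addn1 negb_or andbC.
Qed.

Lemma Eset0 : Eset e 0 = setT.
Proof. by apply/setP => x; rewrite !inE. Qed.

Lemma cardE i : (i <= #|T|)%N -> #|Eset e i| = (#|T| - i)%N.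
Proof.
elim: i => [|i IH] Hi; first by rewrite Eset0 cardsT subn0.
have Hi' : (i < #|T|)%N by [].
have [He _] := step _ Hi'.
have := cardsD1 (e i.+1) (Eset e i); rewrite He IH; last exact: ltnW.
rewrite EsetS subnS => ->; exact: erefl.
Qed.

Lemma EsetS_sub i : Eset e i.+1 \subset Eset e i.
Proof. by rewrite EsetS subD1set. Qed.

Lemma Eset_mono i j : (i <= j)%N -> Eset e j \subset Eset e i.
Proof.
elim: j => [|j IH]; first by rewrite leqn0 => /eqP ->.
rewrite leq_eqVlt => /orP [/eqP -> //| Hij].
exact: subset_trans (EsetS_sub j) (IH Hij).
Qed.

Lemma Eset_big i : (#|T| <= i)%N -> Eset e i = set0.
Proof.
move=> Hi; apply/eqP; rewrite -cards_eq0 -leqn0.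
have := subset_leq_card (Eset_mono _ _ Hi); rewrite (cardE _ (leqnn _)) subnn; exact: id.
Qed.

Lemma inB i x : (x \in Bset e w i) = (x \in Eset e i) && (80%:R <= w i x).
Proof. by rewrite /Bset in_set. Qed.
Lemma inS i x : (x \in Sset e w i) = (x \in Eset e i) && (w i x <= 2%:R).
Proof. by rewrite /Sset in_set. Qed.

Notation wB i := (wsum w i (Bset e w i)).
Notation sS i := #|Sset e w i|.

Lemma wB_ge0 i : 0 <= wB i.
Proof.
apply: sumr_ge0 => x; rewrite inB => /andP [_ H].
exact: le_trans H.
Qed.

Lemma wB_step i : wB i.+1 <= wB i.
Proof.
case: (ltnP i #|T|) => Hi; last first.
  rewrite /wsum.
  have -> : Bset e w i.+1 = set0.
    apply/setP => x; rewrite inB (Eset_big _ (leqW Hi)) in_set0; exact: erefl.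
  by rewrite big_set0; apply: wB_ge0.
have [_ Hw] := step _ Hi.
have Hsub : Bset e w i.+1 \subset Bset e w i.
  apply/subsetP => x; rewrite !inB => /andP [Hx H80].
  rewrite (subsetP (EsetS_sub i)) //=.
  exact: le_trans H80 (proj2 (Hw x Hx)).
apply: (@le_trans _ _ (\sum_(x in Bset e w i.+1) w i x)).
  apply: ler_sum => x; rewrite inE => /andP [Hx _]; exact: (proj2 (Hw x Hx)).
rewrite /wsum (big_setID (Bset e w i.+1) (A := Bset e w i)) /=.
rewrite (setIidPr Hsub) lerDl.
apply: sumr_ge0 => x; rewrite !inE => /andP [_ /andP [_ H]].
exact: le_trans H.
Qed.

Lemma wB_mono i j : (i <= j)%N -> wB j <= wB i.
Proof.
elim: j => [|j IH]; first by rewrite leqn0 => /eqP ->.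
rewrite leq_eqVlt => /orP [/eqP -> //| Hij].
exact: le_trans (wB_step j) (IH Hij).
Qed.

Lemma S_step i : (sS i <= (sS i.+1).+1)%N.
Proof.
case: (ltnP i #|T|) => Hi; last first.
  suff -> : Sset e w i = set0 by rewrite cards0.
  apply/setP => x; rewrite inS (Eset_big _ Hi) in_set0; exact: erefl.
have [He Hw] := step _ Hi.
have Hsub : Sset e w i :\ e i.+1 \subset Sset e w i.+1.
  apply/subsetP => x; rewrite in_setD1 !inS => /andP [Hne /andP [Hx H2]].
  have Hx1 : x \in Eset e i.+1 by rewrite EsetS in_setD1 Hne Hx.
  rewrite Hx1 /=; exact: le_trans (proj2 (Hw x Hx1)) H2.
have := subset_leq_card Hsub.
have := cardsD1 (e i.+1) (Sset e w i).
case: (e i.+1 \in Sset e w i) => /=; timeout 10 lia.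
Qed.

Lemma ivt l i : (l <= sS 0)%N -> (sS i <= l)%N -> exists2 j, (j <= i)%N & sS j = l.
Proof.
move=> H0; elim: i => [|i IH] Hi.
  by exists 0%N => //; apply/eqP; rewrite eqn_leq Hi H0.
case: (leqP (sS i) l) => Hl.
  by have [j Hj Hj2] := IH Hl; exists j => //; exact: leqW.
exists i.+1 => //; have := S_step i; timeout 10 lia.
Qed.

Lemma first_ex l j : sS j = l -> exists i, is_first_idx e w l i /\ (i <= j)%N.
Proof.
move=> Hj.
have exP : exists n, (fun n => sS n == l) n by exists j; apply/eqP.
case: (ex_minnP exP) => m /eqP Hm Hmin.
exists m; split; last by apply: Hmin; apply/eqP.
split => // j' Hj' Heq.
have := Hmin j' (introT eqP Heq); timeout 10 lia.
Qed.

Lemma first_uniq l i1 i2 : is_first_idx e w l i1 -> is_first_idx e w l i2 -> i1 = i2.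
Proof.
move=> [H1 F1] [H2 F2].
case: (ltngtP i1 i2) => // H.
- by case: (F2 _ H).
- by case: (F1 _ H).
Qed.


Hypothesis HE0 : wsum w 0 (Eset e 0) = #|T|%:R.

Lemma wB0_le : wB 0 <= #|T|%:R.
Proof.
rewrite -HE0 /wsum (big_setID (Bset e w 0) (A := Eset e 0)) /=.
have Hsub : Bset e w 0 \subset Eset e 0.
  by apply/subsetP => x; rewrite inB => /andP [].
rewrite (setIidPr Hsub) lerDl.
by apply: sumr_ge0 => x _; apply: w0.
Qed.

Lemma S0_big : (#|T| <= 2 * sS 0)%N.
Proof.
have H : (2 * #|~: Sset e w 0|)%:R <= (#|T|%:R : R).
  rewrite -HE0 /wsum Eset0 (big_setID (Sset e w 0) (A := setT)) /= setTI setTD.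
  apply: (@le_trans _ _ (\sum_(x in ~: Sset e w 0) w 0 x)); last first.
    rewrite lerDr; by apply: sumr_ge0 => x _; apply: w0.
  apply: (@le_trans _ _ (\sum_(x in ~: Sset e w 0) (2%:R : R))).
    by rewrite sumr_const natrM mulrC mulr_natl.
  apply: ler_sum => x; rewrite in_setC inS Eset0 in_setT /= -ltNge.
  exact: ltW.
rewrite ler_nat in H.
have := cardsC (Sset e w 0); lia.
Qed.

Lemma G_claim c : (1 <= c)%N ->
  (forall l, (c <= l <= sS 0 %/ 2)%N -> ~ bad e w l) ->
  forall l, (c <= l)%N -> forall i, is_first_idx e w l i -> wB i <= (4 * l)%:R.
Proof.
move=> Hc Hgood.
suff H : forall m l, (sS 0 - l < m)%N -> (c <= l)%N ->
   forall i, is_first_idx e w l i -> wB i <= (4 * l)%:R.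
  by move=> l; apply: (H (sS 0 - l).+1); apply: ltnSn.
elim=> [|m IH] l Hm Hl i1 Hi1; first by rewrite ltn0 in Hm.
case: (ltnP (sS 0) (2 * l)) => H2.
  apply: le_trans (wB_mono _ _ (leq0n i1)) _.
  apply: le_trans wB0_le _.
  rewrite ler_nat; have := S0_big; lia.
have Hnb : ~ bad e w l.
  apply: Hgood; rewrite Hl /= leq_divRL //; lia.
have HsT : sS #|T| = 0%N.
  apply/eqP; rewrite cards_eq0; apply/eqP/setP => x.
  rewrite inS (Eset_big _ (leqnn _)) in_set0; exact: erefl.
have Hle : (sS #|T| <= 2 * l)%N by rewrite HsT.
have [j _ Hj] := ivt (2 * l) #|T| H2 Hle.
have [i2 [Hi2 _]] := first_ex _ _ Hj.
have HIH : wB i2 <= (4 * (2 * l))%:R.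
  apply: (IH (2 * l)) => //; lia.
rewrite mulnA in HIH.
rewrite leNgt; apply/negP => Hlt; apply: Hnb.
by exists i1, i2.
Qed.

Lemma final lmax c i : (1 <= c)%N -> (c <= sS 0)%N -> (c <= 2 * lmax)%N ->
  (1 <= lmax)%N ->
  (forall l, (c <= l <= sS 0 %/ 2)%N -> ~ bad e w l) ->
  (i < #|T|)%N ->
  wsum w i (Eset e i) / (#|T| - i)%:R <= (90 * lmax)%:R.
Proof.
move=> Hc1 HcS Hcl Hl1 Hgood Hi.
have HE : #|Eset e i| = (#|T| - i)%N by apply: cardE; exact: ltnW.
have HsE : (sS i <= #|T| - i)%N.
  rewrite -HE; apply: subset_leq_card; apply/subsetP => x.
  by rewrite inS => /andP [].
have Hki : (0 < #|T| - i)%N by rewrite subn_gt0.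
have h1 : (lmax <= lmax * (#|T| - i))%N by rewrite leq_pmulr.
have h2 : (#|T| - i <= lmax * (#|T| - i))%N by rewrite leq_pmull.
have HB : wB i <= (8 * lmax * (#|T| - i))%:R.
  case: (leqP (sS i) (sS 0)) => Hs.
    set l := maxn (sS i) c.
    have Hl0 : (l <= sS 0)%N by rewrite geq_max Hs HcS.
    have Hli : (sS i <= l)%N by rewrite leq_maxl.
    have [j Hji Hj] := ivt l i Hl0 Hli.
    have [i1 [Hi1 Hij]] := first_ex _ _ Hj.
    apply: le_trans (wB_mono _ _ (leq_trans Hij Hji)) _.
    apply: le_trans (G_claim _ Hc1 Hgood l (leq_maxr _ _) i1 Hi1) _.
    rewrite ler_nat /l -mulnA; lia.
  apply: le_trans (wB_mono _ _ (leq0n i)) _.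
  apply: le_trans wB0_le _.
  rewrite ler_nat -mulnA; have := S0_big; lia.
have Htot : wsum w i (Eset e i) <= wB i + (80 * (#|T| - i))%:R.
  rewrite /wsum (big_setID (Bset e w i) (A := Eset e i)) /=.
  have Hsub : Bset e w i \subset Eset e i.
    by apply/subsetP => x; rewrite inB => /andP [].
  rewrite (setIidPr Hsub) lerD2l.
  apply: (@le_trans _ _ (\sum_(x in Eset e i :\: Bset e w i) (80%:R : R))).
    apply: ler_sum => x; rewrite in_setD inB => /andP [Hx1 Hx2].
    rewrite Hx2 /= -ltNge in Hx1; exact: ltW.
  rewrite sumr_const natrM mulr_natr; apply: ler_wpMn2l; first exact: ler0n.
  rewrite -HE; apply: subset_leq_card; apply: subsetDl.
have Hpos : 0 < ((#|T| - i)%N%:R : R) by rewrite ltr0n subn_gt0.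
rewrite ler_pdivrMr // -natrM.
apply: (le_trans Htot).
apply: le_trans (lerD HB (lexx _)) _.
rewrite -natrD ler_nat; nia.
Qed.
End Aux.

Theorem lemma3 (R : realFieldType) (T : finType) (k : nat)
  (e : nat -> T) (w : nat -> T -> R) (p : nat -> T -> R) (eps : R)
  (lmax : nat) :
  #|T| = k ->
  0 < eps -> eps < 2^-1 ->
  adv_realization e w eps p ->
  wsum w 0 (Eset e 0) = k%:R ->
  ((bad e w lmax /\ (1 <= lmax <= #|Sset e w 0| %/ 2)%N /\
     (forall l, (lmax < l <= #|Sset e w 0| %/ 2)%N -> ~ bad e w l))
   \/
   ((forall l, (1 <= l <= #|Sset e w 0| %/ 2)%N -> ~ bad e w l) /\ lmax = 1%N)) ->
  forall i, (i < k)%N ->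
    wsum w i (Eset e i) / (k - i)%:R <= (90 * lmax)%:R.
Proof.
move=> Hk _ _ [w0 Hstep] Hsum Hcase i Hi.
have step : forall i, (i < #|T|)%N -> e i.+1 \in Eset e i /\
  (forall x, x \in Eset e i.+1 -> 0 <= w i.+1 x /\ w i.+1 x <= w i x).
  by move=> j Hj; have [? ? _] := Hstep j Hj.
subst k.
have HS : (#|T| <= 2 * #|Sset e w 0|)%N.
  apply: S0_big; first [exact: w0 | exact: Hsum | exact: step].
case: Hcase => [[_ [/andP [Hl1 Hl2] Hgood]] | [Hgood ->]].
- apply: (final _ _ _ _ w0 step Hsum lmax lmax.+1 i) => //.
  + rewrite leq_divRL // in Hl2; lia.
  + lia.
- have H1 : (1 <= #|Sset e w 0|)%N by lia.
  exact: (final _ _ _ _ w0 step Hsum 1 1 i (leqnn 1) H1 (isT : (1 <= 2 * 1)%N) (leqnn 1) Hgood Hi).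
Qed.
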